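(* Let $\Gamma=(U\cup V,E)$ be a $3$-regular bipartite graph with bipartition $U,V$, and let $M$ be the $n\times n$ matrix described in the context. If $\Gamma$ has an odd number of perfect matchings, then $\det(M)\neq 0$.
   Context: Construction of $\hat\Gamma$: for each vertex $v$ of $\Gamma$ with neighbours $x,y,z$, there are four inner vertices $a_{v,S}$, one for each subset $S\subseteq\{x,y,z\}$ of even size (the set $I_v$), and six outer vertices $b_{v,u,0},b_{v,u,1}$ for $u\in\{x,y,z\}$ (the set $O_v$). Within the gadget, $a_{v,S}$ is adjacent to $b_{v,u,1}$ if $u\in S$ and to $b_{v,u,0}$ if $u\notin S$. For each edge $e=\{u,v\}\in E$ and $i\in\{0,1\}$ there is an edge $e_i$ joining $b_{v,u,i}$ and $b_{u,v,i}$. No other edges. Let $X=\bigcup_{v\in U}I_v\cup\bigcup_{v\in V}O_v$ and $Y=\bigcup_{v\in V}I_v\cup\bigcup_{v\in U}O_v$; all edges of $\hat\Gamma$ join $X$ to $Y$ and $|X|=|Y|=n=10|U|$. Fix arbitrary bijections $\eta:X\to[n]$ and $\eta':Y\to[n]$, and let $M$ be the $n\times n$ $\{0,1\}$-matrix (over a field of characteristic $0$, e.g. the rationals) with $M(\eta(x),\eta'(y))=1$ iff $x$ and $y$ are adjacent in $\hat\Gamma$, and $0$ otherwise. *)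

(* Defs.v *)
From HB Require Import structures.
From mathcomp Require Import all_boot all_order all_algebra.
Set Implicit Arguments. Unset Strict Implicit. Unset Printing Implicit Defensive.

(* A bipartite graph Gamma = (U ∪ V, E) is given by two finite types U, V
   (the two sides) and an edge relation e : U -> V -> bool ({u,v} ∈ E iff e u v). *)

Section Gadget.
Variables (U V : finType) (e : U -> V -> bool).

Definition three_regular : Prop :=
  (forall u : U, #|[set v | e u v]| = 3) /\ (forall v : V, #|[set u | e u v]| = 3).

Definition perfect_matching (Mt : {set U * V}) : bool :=
  [forall p in Mt, e p.1 p.2] &&
  [forall u : U, #|[set p in Mt | p.1 == u]| == 1] &&
  [forall v : V, #|[set p in Mt | p.2 == v]| == 1].

Definition perfect_matchings : {set {set U * V}} := [set Mt | perfect_matching Mt].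

Definition W : finType := (U + V)%type.

Definition nbh (w : W) : {set W} :=
  [set w' : W | match w, w' with
                | inl u, inr v => e u v
                | inr v, inl u => e u v
                | _, _ => false
                end].

Definition isU (w : W) : bool := if w is inl _ then true else false.

(* Candidate vertices of hat Gamma:
   inl (v, Sv)      stands for the inner vertex a_{v,S},
   inr (v, u, i)   stands for the outer vertex b_{v,u,i}. *)
Definition Vhat : finType := ((W * {set W}) + (W * W * bool))%type.

Definition valid_inner (v : W) (S : {set W}) : bool :=
  (S \subset nbh v) && ~~ odd #|S|.
Definition valid_outer (v u : W) : bool := u \in nbh v.

(* X = ⋃_{v∈U} I_v ∪ ⋃_{v∈V} O_v ;  Y = ⋃_{v∈V} I_v ∪ ⋃_{v∈U} O_v. *)
Definition inX (x : Vhat) : bool :=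
  match x with
  | inl (v, Sv) => isU v && valid_inner v Sv
  | inr (v, u, _) => ~~ isU v && valid_outer v u
  end.
Definition inY (x : Vhat) : bool :=
  match x with
  | inl (v, Sv) => ~~ isU v && valid_inner v Sv
  | inr (v, u, _) => isU v && valid_outer v u
  end.

Definition Xt : finType := {x : Vhat | inX x}.
Definition Yt : finType := {x : Vhat | inY x}.

(* Adjacency in hat Gamma (between candidate vertices; only used on valid ones):
   a_{v,S} ~ b_{v,u,1} if u ∈ S, a_{v,S} ~ b_{v,u,0} if u ∉ S,
   b_{v,u,i} ~ b_{u,v,i} (edge e_i for e = {u,v}). *)
Definition hadj (x y : Vhat) : bool :=
  match x, y with
  | inl (v, Sv), inr (w, u, i) => (v == w) && (i == (u \in Sv))
  | inr (w, u, i), inl (v, Sv) => (v == w) && (i == (u \in Sv))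
  | inr (v, u, i), inr (v', u', i') => (v' == u) && (u' == v) && (i == i')
  | inl _, inl _ => false
  end.

End Gadget.

(* Main.v *)
Require Import Defs.
From HB Require Import structures.
From mathcomp Require Import all_boot all_order all_algebra.
From mathcomp Require Import fingroup perm.
From mathcomp Require Import ring.
Set Implicit Arguments. Unset Strict Implicit. Unset Printing Implicit Defensive.
Import GRing.Theory.
Local Open Scope ring_scope.

Lemma card_perm_pm (U V : finType) (e : U -> V -> bool) (k : nat)
  (ev : 'I_k -> U) (fv : 'I_k -> V) :
  bijective ev -> bijective fv ->
  #|[set s : 'S_k | [forall i, e (ev i) (fv (s i))]]| = #|perfect_matchings e|.
Proof.
move=> evb fvb.
have evi := bij_inj evb; have fvi := bij_inj fvb.
case: evb => evI evK evK'; case: fvb => fvI fvK fvK'.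
pose pmOf (s : 'S_k) : {set U * V} := [set (ev i, fv (s i)) | i : 'I_k].
rewrite -(@card_in_imset _ _ pmOf); last first.
  move=> s t _ _ Hst; apply/permP => i.
  have : (ev i, fv (s i)) \in pmOf t by rewrite -Hst; apply: imset_f.
  case/imsetP => j _ [/evi eij fij]; subst j; exact: fvi.
apply: eq_card => Mt; rewrite [in RHS]inE /perfect_matching.
apply/imsetP/idP.
  case=> s; rewrite inE => /forallP Hs ->.
  rewrite -andbA; apply/and3P; split.
  - apply/forallP => p; apply/implyP => /imsetP [i _ ->] /=; exact: Hs.
  - apply/forallP => u; apply/cards1P; exists (u, fv (s (evI u))).
    apply/setP => p; rewrite !inE; apply/andP/eqP.
      case=> /imsetP [j _ ->] /= /eqP Hj; subst u; by rewrite evK.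
    move=> ->; split; last by [].
    by rewrite -{1}(evK' u); apply: imset_f.
  - apply/forallP => v; apply/cards1P; exists (ev (s^-1 (fvI v))%g, v).
    apply/setP => p; rewrite !inE; apply/andP/eqP.
      case=> /imsetP [j _ ->] /= /eqP Hj; subst v; by rewrite fvK permK.
    move=> ->; split; last by [].
    apply/imsetP; exists (s^-1 (fvI v))%g => //.
    by rewrite permKV fvK'.
case/andP => /andP [/forallP Hedge /forallP HU] /forallP HV.
have Hex : forall i, exists j, (ev i, fv j) \in Mt.
  move=> i; case/cards1P: (HU (ev i)) => p Hp.
  have : p \in [set p in Mt | p.1 == ev i] by rewrite Hp set11.
  rewrite inE => /andP [pM /eqP p1]; exists (fvI p.2).
  by rewrite fvK' -p1 -surjective_pairing.
case: (fin_all_exists Hex) => f Hf.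
have uniqU : forall p q, p \in Mt -> q \in Mt -> p.1 = q.1 -> p = q.
  move=> p q pM qM pq; case/cards1P: (HU p.1) => r Hr.
  have : p \in [set p0 in Mt | p0.1 == p.1] by rewrite inE pM eqxx.
  have : q \in [set p0 in Mt | p0.1 == p.1] by rewrite inE qM pq eqxx.
  by rewrite Hr !inE => /eqP -> /eqP ->.
have uniqV : forall p q, p \in Mt -> q \in Mt -> p.2 = q.2 -> p = q.
  move=> p q pM qM pq; case/cards1P: (HV p.2) => r Hr.
  have : p \in [set p0 in Mt | p0.2 == p.2] by rewrite inE pM eqxx.
  have : q \in [set p0 in Mt | p0.2 == p.2] by rewrite inE qM pq eqxx.
  by rewrite Hr !inE => /eqP -> /eqP ->.
have finj : injective f.
  move=> i j fij.
  have := uniqV _ _ (Hf i) (Hf j); rewrite /= fij => /(_ erefl) [] /evi //.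
exists (perm finj).
  rewrite inE; apply/forallP => i; rewrite permE.
  by have /implyP := Hedge (ev i, fv (f i)); apply; exact: Hf.
apply/setP => p; apply/idP/imsetP.
  move=> pM; exists (evI p.1) => //; rewrite permE.
  apply: uniqU => //; last by rewrite /= evK'.
by case=> i _ ->; rewrite permE.
Qed.

Lemma intr_char0_eq0 (F : fieldType) (hF : [pchar F] =i pred0) (z : int) :
  z%:~R = 0 :> F -> z = 0.
Proof.
have H := (pcharf0P F).1 hF.
case: z => n /=.
  by move/eqP; rewrite H => /eqP ->.
rewrite NegzE mulrNz => /eqP; rewrite oppr_eq0 H.
done.
Qed.

Lemma det01_F2 (k : nat) (P : 'I_k -> 'I_k -> bool) :
  \det (\matrix_(i, j) (P i j)%:R : 'M['F_2]_k) =
  (#|[set s : 'S_k | [forall i, P i (s i)]]|)%:R.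
Proof.
rewrite /determinant.
rewrite (eq_bigr (fun s : 'S_k => ([forall i, P i (s i)] : nat)%:R)); last first.
  move=> s _.
  have -> : (-1 : 'F_2) = 1 by apply/eqP.
  rewrite expr1n mul1r.
  case: (boolP [forall i, P i (s i)]) => [/forallP H|H].
    by rewrite big1 // => i _; rewrite mxE H.
  rewrite negb_forall in H; case/existsP: H => i Hi.
  by rewrite (bigD1 i) //= mxE (negbTE Hi) mul0r.
rewrite -natr_sum.
congr (_%:R).
by rewrite -sum1_card [RHS]big_mkcond /=; apply: eq_bigr => s _; rewrite inE; case: ifP.
Qed.

Lemma det_adj (U V : finType) (e : U -> V -> bool) (k : nat)
  (ev : 'I_k -> U) (fv : 'I_k -> V) (F : fieldType) (hF : [pchar F] =i pred0) :
  bijective ev -> bijective fv -> odd #|perfect_matchings e| ->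
  \det (\matrix_(i, j) (e (ev i) (fv j))%:R : 'M[F]_k) != 0.
Proof.
move=> evb fvb odd_pm.
pose Ai : 'M[int]_k := \matrix_(i, j) (e (ev i) (fv j))%:R.
have mapF : forall (R : nzRingType),
    \matrix_(i, j) (e (ev i) (fv j))%:R = map_mx (intr : int -> R) Ai.
  by move=> R; apply/matrixP => i j; rewrite !mxE rmorph_nat.
rewrite (mapF F) det_map_mx.
apply/negP => /eqP /(intr_char0_eq0 hF) H0.
have := det_map_mx (intr : {rmorphism int -> 'F_2}) Ai.
rewrite H0 rmorph0 -mapF det01_F2 /= (@card_perm_pm U V e k ev fv evb fvb).
rewrite -(odd_double_half #|perfect_matchings e|) odd_pm natrD -muln2 natrM.
have -> : (2%:R : 'F_2) = 0 by apply/eqP.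
by rewrite mulr0 addr0 => /eqP; rewrite oner_eq0.
Qed.

Lemma adj_kernel (U V : finType) (e : U -> V -> bool) (F : fieldType)
  (hF : [pchar F] =i pred0) (c : U -> F) :
  #|U| = #|V| -> odd #|perfect_matchings e| ->
  (forall v, \sum_(u | e u v) c u = 0) -> forall u, c u = 0.
Proof.
move=> hUV odd_pm Hc.
pose ev : 'I_#|U| -> U := enum_val.
pose fv (j : 'I_#|U|) : V := enum_val (cast_ord hUV j).
have evb : bijective ev by exists enum_rank; [exact: enum_valK | exact: enum_rankK].
have fvb : bijective fv.
  exists (fun v => cast_ord (esym hUV) (enum_rank v)).
    by move=> j; rewrite /fv enum_valK cast_ordK.
  by move=> v; rewrite /fv cast_ordKV enum_rankK.
have Hd := det_adj hF evb fvb odd_pm.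
pose r : 'rV[F]_#|U| := \row_i c (ev i).
have Hr : r *m (\matrix_(i, j) (e (ev i) (fv j))%:R) = 0.
  apply/matrixP => i j; rewrite !mxE.
  transitivity (\sum_(u | e u (fv j)) c u); last exact: Hc.
  rewrite (reindex ev (onW_bij _ evb)) /= [RHS]big_mkcond /=.
  apply: eq_bigr => l _; rewrite !mxE.
  by case: (e (ev l) (fv j)); rewrite ?mulr1 ?mulr0.
have r0 : r = 0.
  apply/eqP; apply: contraNT Hd => rn0.
  by apply/det0P; exists r.
move=> u; rewrite -(enum_rankK u).
by have := congr1 (fun m : 'rV[F]_#|U| => m 0 (enum_rank u)) r0; rewrite /= !mxE.
Qed.

Lemma card_as_sum (T : finType) (P : pred T) : #|[set x | P x]| = (\sum_x (P x : nat))%N.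
Proof.
rewrite -sum1_card [LHS]big_mkcond /=; apply: eq_bigr => x _; rewrite inE; by case: (P x).
Qed.

Lemma card_reg (U V : finType) (e : U -> V -> bool) : three_regular e -> #|U| = #|V|.
Proof.
case=> HU HV.
have : (#|U| * 3 = #|V| * 3)%N.
  transitivity (\sum_(u : U) #|[set v | e u v]|)%N.
    by rewrite (eq_bigr (fun _ => 3%N)) // sum_nat_const.
  transitivity (\sum_(v : V) #|[set u | e u v]|)%N; last first.
    by rewrite (eq_bigr (fun _ => 3%N)) // sum_nat_const.
  rewrite (eq_bigr (fun u => \sum_v (e u v : nat))%N); last by move=> u _; rewrite card_as_sum.
  rewrite exchange_big /=; apply: eq_bigr => v _; by rewrite card_as_sum.
by move/eqP; rewrite eqn_mul2r /= => /eqP.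
Qed.

Lemma sum_pair (R : zmodType) (I J : finType) (F : I * J -> R) :
  \sum_p F p = \sum_i \sum_j F (i, j).
Proof. by rewrite pair_bigA; apply: eq_bigr => [[]]. Qed.

Lemma sum_single (R : pzRingType) (T : finType) (F : T -> R) (P : pred T) (t0 : T) :
  (forall t, P t -> t = t0) -> \sum_t F t * (P t)%:R = F t0 * (P t0)%:R.
Proof.
move=> H; rewrite (bigD1 t0) //= big1 ?addr0 // => t nt.
case: (boolP (P t)) => Pt; last by rewrite mulr0.
by move: nt; rewrite (H t Pt) eqxx.
Qed.

Lemma enum3 (T : finType) (A : {set T}) : #|A| = 3%N ->
  exists a b c, [/\ enum A = [:: a; b; c], a != b, a != c & b != c].
Proof.
rewrite cardE; have := enum_uniq A.
case: (enum A) => [|a [|b [|c [|d s]]]] //= uq _.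
exists a, b, c; move: uq; rewrite !inE negb_or /=.
by case/andP => /andP [-> ->] /andP [-> _].
Qed.

Lemma sum_enum3 (R : zmodType) (T : finType) (A : {set T}) a b c (F : T -> R) :
  enum A = [:: a; b; c] -> \sum_(x in A) F x = F a + F b + F c.
Proof. by move=> H; rewrite -big_enum H !big_cons big_nil /= addr0 addrA. Qed.

Lemma mem_enum3 (T : finType) (A : {set T}) a b c x :
  enum A = [:: a; b; c] -> x \in A -> [\/ x = a, x = b | x = c].
Proof.
move=> H; rewrite -mem_enum H !inE.
by case/orP => [/eqP->|/orP [/eqP->|/eqP->]]; [apply: Or31|apply: Or32|apply: Or33].
Qed.

Lemma card_sub3 (T : finType) (A S : {set T}) a b c :
  enum A = [:: a; b; c] -> S \subset A ->
  #|S| = ((a \in S) + (b \in S) + (c \in S))%N.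
Proof.
move=> H sub.
rewrite -{1}(setIidPr sub) -sum1_card.
rewrite (eq_bigl (fun x => (x \in A) && (x \in S))); last by move=> x; rewrite inE.
rewrite big_mkcondr -big_enum H /= !big_cons big_nil /= addn0 addnA.

done.
Qed.

Lemma set_eq3 (T : finType) (A S S0 : {set T}) a b c :
  enum A = [:: a; b; c] -> S \subset A -> S0 \subset A ->
  (S == S0) = [&& (a \in S) == (a \in S0), (b \in S) == (b \in S0) & (c \in S) == (c \in S0)].
Proof.
move=> H sub sub0; apply/eqP/and3P.
  by move=> ->; rewrite !eqxx.
case=> /eqP ha /eqP hb /eqP hc; apply/setP => x.
case: (boolP (x \in A)) => xA.
  by case: (mem_enum3 H xA) => ->.
apply/idP/idP => xS; [move/subsetP: sub => /(_ x xS) | move/subsetP: sub0 => /(_ x xS)];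
  by rewrite (negbTE xA).
Qed.

Lemma bool_id3 (b1 b2 b3 c1 c2 c3 : bool) :
  ~~ odd (b1 + b2 + b3) -> ~~ odd (c1 + c2 + c3) ->
  ((b1 == c1) + (b2 == c2) + (b3 == c3) = 1 + 2 * [&& b1 == c1, b2 == c2 & b3 == c3])%N.
Proof. by case: b1; case: b2; case: b3; case: c1; case: c2; case: c3. Qed.


Lemma two_mul0 (F : fieldType) (two0 : 2%:R != 0 :> F) (x : F) : 2%:R * x = 0 -> x = 0.
Proof. by move/eqP; rewrite mulf_eq0 (negbTE two0) /= => /eqP. Qed.

Lemma four_eqs (F : fieldType) (two0 : 2%:R != 0 :> F) (a1 a2 a3 b1 b2 b3 : F) :
 a1 + a2 + a3 = 0 -> b1 + b2 + a3 = 0 -> b1 + a2 + b3 = 0 -> a1 + b2 + b3 = 0 ->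
 [/\ a1 = b1, a2 = b2, a3 = b3 & a1 + b1 + (a2 + b2) + (a3 + b3) = 0].
Proof.
move=> e1 e2 e3 e4.
have sub0 : forall x y : F, x - y = 0 -> x = y by move=> x y /eqP; rewrite subr_eq0 => /eqP.
split.
- apply: sub0; apply: (two_mul0 two0).
  transitivity ((a1+a2+a3) - (b1+b2+a3) + ((a1+a2+a3) - (b1+a2+b3)) - ((a1+a2+a3) - (a1+b2+b3))).
    ring.
  by rewrite e1 e2 e3 e4 !subrr addr0 subrr.
- apply: sub0; apply: (two_mul0 two0).
  transitivity ((a1+a2+a3) - (b1+b2+a3) + ((a1+a2+a3) - (a1+b2+b3)) - ((a1+a2+a3) - (b1+a2+b3))).
    ring.
  by rewrite e1 e2 e3 e4 !subrr addr0 subrr.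
- apply: sub0; apply: (two_mul0 two0).
  transitivity ((a1+a2+a3) - (b1+a2+b3) + ((a1+a2+a3) - (a1+b2+b3)) - ((a1+a2+a3) - (b1+b2+a3))).
    ring.
  by rewrite e1 e2 e3 e4 !subrr addr0 subrr.
- apply: (two_mul0 two0).
  transitivity ((a1+a2+a3) + (b1+b2+a3) + (b1+a2+b3) + (a1+b2+b3)).
    ring.
  by rewrite e1 e2 e3 e4 !addr0.
Qed.

Lemma nbh_card (U V : finType) (e : U -> V -> bool) :
  three_regular e -> forall w, #|nbh e w| = 3%N.
Proof.
case=> HU HV [u|v].
  rewrite -(HU u) -(card_imset _ (@inr_inj U V)); apply: eq_card => x.
  case: x => [a|b]; rewrite !inE /=.
    by apply/esym/negbTE/imsetP => -[b _].
  by rewrite (mem_imset _ _ (@inr_inj U V)) inE.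
rewrite -(HV v) -(card_imset _ (@inl_inj U V)); apply: eq_card => x.
case: x => [a|b]; rewrite !inE /=.
  by rewrite (mem_imset _ _ (@inl_inj U V)) inE.
by apply/esym/negbTE/imsetP => -[b' _].
Qed.

Theorem mainTheorem6 (U V : finType) (e : U -> V -> bool)
  (F : fieldType) (hF : [pchar F] =i pred0)
  (eta : Xt e -> 'I_(10 * #|U|)) (eta' : Yt e -> 'I_(10 * #|U|))
  (M : 'M[F]_(10 * #|U|)) :
  three_regular e ->
  bijective eta -> bijective eta' ->
  (forall (x : Xt e) (y : Yt e),
      M (eta x) (eta' y) = (hadj (val x) (val y))%:R) ->
  odd #|perfect_matchings e| ->
  \det M != 0.
Proof.
move=> reg etab eta'b HM odd_pm.
have hUV := card_reg reg.
have two0 : (2%:R : F) != 0 by rewrite ((pcharf0P F).1 hF).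
apply/negP => /det0P [w wn0 wM].
pose G (x : Vhat U V) : F := if (insub x : option (Xt e)) is Some x' then w 0 (eta x') else 0.
have GX : forall x : Xt e, G (val x) = w 0 (eta x) by move=> x; rewrite /G valK.
have GN : forall x, ~~ inX e x -> G x = 0 by move=> x nx; rewrite /G insubN.
have key : forall y : Yt e, \sum_(x : Vhat U V) G x * (hadj x (val y))%:R = 0.
  move=> y; have := congr1 (fun m : 'rV[F]_(10 * #|U|) => m 0 (eta' y)) wM; rewrite !mxE => H; apply: etrans H.
  rewrite (reindex eta (onW_bij _ etab)) /=.
  rewrite (bigID (inX e)) /= [X in _ + X]big1 ?addr0; last first.
    by move=> x nx; rewrite GN ?mul0r.
  rewrite (big_sub (inX e)) /=; apply: eq_bigr => x _.
  by rewrite GX HM.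
pose h (u v : W U V) (i : bool) :=
  \sum_(S : {set W U V}) G (inl (u, S)) * (i == (v \in S))%:R.
pose cc (u : W U V) := \sum_(S : {set W U V}) G (inl (u, S)).
have E2 : forall u0 v0 i, e u0 v0 ->
    h (inl u0) (inr v0) i + G (inr (inr v0, inl u0, i)) = 0.
  move=> u0 v0 i euv.
  have Hy : inY e (inr (inl u0, inr v0, i)) by rewrite /= /valid_outer inE.
  have := key (Sub _ Hy); rewrite /= big_sumType /= sum_pair => H; apply: etrans H.
  congr (_ + _).
    rewrite /h (bigD1 (inl u0)) //= [X in _ = _ + X]big1 ?addr0.
      by apply: eq_bigr => S _; rewrite eqxx.
    move=> w' nw; apply: big1 => S _.
    by rewrite (negbTE nw) mulr0.
  rewrite (sum_single _ (t0 := (inr v0, inl u0, i))) /= ?eqxx ?mulr1 //.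
  case=> [[a b] j] /=; case/andP => /andP [/eqP-> /eqP->] /eqP-> //.
have E1 : forall v0 (T : {set W U V}), T \subset nbh e (inr v0) -> ~~ odd #|T| ->
    \sum_(u in nbh e (inr v0)) G (inr (inr v0, u, u \in T)) = 0.
  move=> v0 T Ts Te.
  have Hy : inY e (inl (inr v0, T)) by rewrite /= /valid_inner Ts Te.
  have := key (Sub _ Hy); rewrite /= big_sumType /= big1 ?add0r; last first.
    by case=> [a S] _ /=; rewrite mulr0.
  rewrite sum_pair sum_pair => H; apply: etrans H.
  rewrite [RHS](bigD1 (inr v0)) //= [X in _ = _ + X]big1 ?addr0; last first.
    move=> a na; apply: big1 => b _; apply: big1 => j _.
    by rewrite eq_sym (negbTE na) mulr0.
  rewrite big_mkcond /=; apply: eq_bigr => b _.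
  rewrite (sum_single _ (t0 := b \in T)) /= ?eqxx ?mulr1; last by move=> j /eqP.
  case: ifP => // nb; rewrite GN //= /valid_outer nb.
  done.
have hG : forall v0 u i, u \in nbh e (inr v0) -> h u (inr v0) i = - G (inr (inr v0, u, i)).
  move=> v0 [u0|v'] i; rewrite inE //= => euv.
  by apply/eqP; rewrite -addr_eq0 (E2 _ _ _ euv).
have ccs : forall u v, cc u = h u v true + h u v false.
  move=> u v; rewrite /cc /h -big_split /=; apply: eq_bigr => S _.
  by case: (v \in S) => /=; rewrite ?mulr1 ?mulr0 ?addr0 ?add0r.
have S34 : forall v0, (forall u, u \in nbh e (inr v0) -> h u (inr v0) true = h u (inr v0) false)
    /\ \sum_(u in nbh e (inr v0)) cc u = 0.
  move=> v0; have [u1 [u2 [u3 [en d12 d13 d23]]]] := enum3 (nbh_card reg (inr v0)).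
  have mem : forall x, x \in [:: u1; u2; u3] -> x \in nbh e (inr v0).
    by move=> x; rewrite -en mem_enum.
  have hu1 : u1 \in nbh e (inr v0) by apply: mem; rewrite !inE eqxx.
  have hu2 : u2 \in nbh e (inr v0) by apply: mem; rewrite !inE eqxx ?orbT.
  have hu3 : u3 \in nbh e (inr v0) by apply: mem; rewrite !inE eqxx ?orbT.
  have sub2 : forall p q, p \in nbh e (inr v0) -> q \in nbh e (inr v0) ->
      [set p; q] \subset nbh e (inr v0).
    move=> p q hp hq; apply/subsetP => x; rewrite in_set2 => /orP [/eqP->|/eqP->] //.
  have ev2 : forall p q : W U V, p != q -> ~~ odd #|[set p; q]|.
    by move=> p q pq; rewrite cards2 pq.
  have e0 := E1 v0 set0 (sub0set _) ltac:(by rewrite cards0).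
  have e12 := E1 v0 _ (sub2 _ _ hu1 hu2) (ev2 _ _ d12).
  have e13 := E1 v0 _ (sub2 _ _ hu1 hu3) (ev2 _ _ d13).
  have e23 := E1 v0 _ (sub2 _ _ hu2 hu3) (ev2 _ _ d23).
  have n21 : (u2 == u1) = false by rewrite eq_sym (negbTE d12).
  have n31 : (u3 == u1) = false by rewrite eq_sym (negbTE d13).
  have n32 : (u3 == u2) = false by rewrite eq_sym (negbTE d23).
  rewrite !(sum_enum3 _ en) !inE !eqxx (negbTE d12) (negbTE d13) (negbTE d23) n21 n31 n32 /=
    in e0 e12 e13 e23.
  case: (four_eqs two0 e0 e12 e13 e23) => q1 q2 q3 qs.
  split.
    move=> u hu; rewrite !(hG _ _ _ hu); congr (- _).
    by case: (mem_enum3 en hu) => ->.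
  rewrite (sum_enum3 _ en) !(ccs _ (inr v0)) !(hG _ _ _ hu1) !(hG _ _ _ hu2) !(hG _ _ _ hu3).
  rewrite -[RHS]oppr0 -qs; ring.
have cc0 : forall u0, cc (inl u0) = 0.
  apply: (adj_kernel hF (c := fun u0 => cc (inl u0)) hUV odd_pm) => v0.
  apply: etrans (proj2 (S34 v0)).
  rewrite [RHS]big_sumType /= [X in _ = _ + X]big_pred0 ?addr0.
    by apply: eq_bigl => u0; rewrite inE.
  by move=> v'; rewrite inE.
have h0 : forall u0 v0 i, e u0 v0 -> h (inl u0) (inr v0) i = 0.
  move=> u0 v0 i euv.
  have hu : inl u0 \in nbh e (inr v0) by rewrite inE.
  have ht := (proj1 (S34 v0)) _ hu.
  have hf : h (inl u0) (inr v0) false = 0.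
    apply: (two_mul0 two0); rewrite mulr_natl mulr2n -{1}ht -ccs cc0 //.
  by case: i; rewrite ?ht hf.
have G7 : forall u0 (S0 : {set W U V}), S0 \subset nbh e (inl u0) -> ~~ odd #|S0| ->
    G (inl (inl u0, S0)) = 0.
  move=> u0 S0 sub0 ev0.
  have [v1 [v2 [v3 [en d12 d13 d23]]]] := enum3 (nbh_card reg (inl u0)).
  have hz : forall v i, v \in nbh e (inl u0) -> h (inl u0) v i = 0.
    by move=> [u'|v0] i; rewrite inE //= => euv; exact: h0.
  have mem : forall x, x \in [:: v1; v2; v3] -> x \in nbh e (inl u0).
    by move=> x; rewrite -en mem_enum.
  have hv1 : v1 \in nbh e (inl u0) by apply: mem; rewrite !inE eqxx.
  have hv2 : v2 \in nbh e (inl u0) by apply: mem; rewrite !inE eqxx ?orbT.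
  have hv3 : v3 \in nbh e (inl u0) by apply: mem; rewrite !inE eqxx ?orbT.
  have : h (inl u0) v1 (v1 \in S0) + h (inl u0) v2 (v2 \in S0) + h (inl u0) v3 (v3 \in S0)
      = 2%:R * G (inl (inl u0, S0)) + cc (inl u0).
    rewrite /h /cc -!big_split /=.
    transitivity (\sum_S G (inl (inl u0, S)) * (1 + 2 * (S0 == S))%:R).
      apply: eq_bigr => S _.
      case: (boolP ((S \subset nbh e (inl u0)) && ~~ odd #|S|)) => [/andP [subS evS]| nv]; last first.
        by rewrite GN ?mul0r ?addr0 //= /valid_inner.
      rewrite -!mulrDr -!natrD bool_id3 -?(set_eq3 en sub0 subS) //.
        by rewrite -(card_sub3 en sub0).
      by rewrite -(card_sub3 en subS).
    rewrite (eq_bigr (fun S => G (inl (inl u0, S)) + (G (inl (inl u0, S)) * 2%:R) * (S0 == S)%:R)); last first.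
      by move=> S _; rewrite natrD natrM mulrDr mulr1 mulrA.
    rewrite big_split /= addrC; congr (_ + _).
    rewrite (sum_single _ (t0 := S0)); last by move=> S /eqP.
    have -> : (S0 == S0) = true by apply/eqP.
    by rewrite mulr1 mulrC.

  rewrite !hz // cc0 !addr0 => /esym H2.
  exact: (two_mul0 two0 H2).
have Gz : forall x, inX e x -> G x = 0.
  case=> [[w' S]|[[w' u] i]] /=.
    case: w' => [u0|v0] //=; rewrite /valid_inner => /andP [subS evS]; exact: G7.
  case: w' => [u0|v0] //=; rewrite /valid_outer => hu.
  have := hG v0 u i hu.
  case: u hu => [u0|v'] hu; last by rewrite inE in hu.
  rewrite inE /= in hu.
  by rewrite h0 // => /esym/eqP; rewrite oppr_eq0 => /eqP.
case: etab => etaI K1 K2.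
have w0 : w = 0.
  apply/rowP => j; rewrite !mxE -(K2 j) -GX Gz //; exact: valP.
by rewrite w0 eqxx in wn0.
Qed.
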